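(* Let $n, r$ be positive integers. Then $$m\big(L(K_n),r\big)=\begin{cases}\left\lfloor\dfrac{(r+2)^2}{8}\right\rfloor, & \text{if } n\geqslant\lceil r/2\rceil+2;\\[2mm] \dbinom{n}{2}, & \text{otherwise.}\end{cases}$$
   Context: All graphs are finite, simple and undirected. For a nonnegative integer $r$ and a graph $G$, the $r$-neighbor bootstrap percolation process on $G$ starts with a set $A_0\subseteq V(G)$ of initially active vertices, and for $i\geqslant 1$, $A_i=A_{i-1}\cup\{v\in V(G) : |N(v)\cap A_{i-1}|\geqslant r\}$, where $N(v)$ is the set of neighbors of $v$. The set $A_0$ is a percolating set if $\bigcup_{i\geqslant 0}A_i=V(G)$. $m(G,r)$ denotes the minimum size of a percolating set. $L(G)$ is the line graph of $G$: its vertex set is $E(G)$ and two vertices are adjacent iff the corresponding edges share an endpoint. $K_n$ is the complete graph on $n$ vertices. *)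

(* Defs.v *)
From mathcomp Require Import all_boot.
Set Implicit Arguments. Unset Strict Implicit. Unset Printing Implicit Defensive.

(* A finite simple graph is a vertex finType T with an adjacency relation e
   (assumed symmetric and irreflexive where relevant).  N(v) = [set u | e v u]. *)

Section Bootstrap.
Variable T : finType.
Variable e : rel T.

Definition bp_step (r : nat) (A : {set T}) : {set T} :=
  A :|: [set v | r <= #|[set u | e v u & u \in A]|].

Definition bp_iter (r : nat) (A : {set T}) (i : nat) : {set T} :=
  iter i (bp_step r) A.

Definition percolating (r : nat) (A : {set T}) : Prop :=
  forall v : T, exists i : nat, v \in bp_iter r A i.

Definition min_percolating_size (r k : nat) : Prop :=
  (exists A : {set T}, percolating r A /\ #|A| = k) /\
  (forall A : {set T}, percolating r A -> k <= #|A|).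

Definition is_edge (A : {set T}) : bool :=
  [exists x, exists y, e x y && (A == [set x; y])].

Definition line_vertex := {A : {set T} | is_edge A}.

Definition line_rel : rel line_vertex :=
  fun A B => (val A != val B) && (val A :&: val B != set0).

End Bootstrap.

Definition K_rel (n : nat) : rel 'I_n := fun x y => x != y.

(* Main.v *)
Require Import Defs.
From mathcomp Require Import all_boot.
From mathcomp Require Import zify.
Set Implicit Arguments. Unset Strict Implicit. Unset Printing Implicit Defensive.

Section Frame.
Variable T : finType.
Definition ES (S : {set T}) : {set {set T}} :=
  [set e : {set T} | (e \subset S) && (#|e| == 2)].
Definition nbr (e f : {set T}) : bool := (e != f) && (e :&: f != set0).
Definition stepB S r (A : {set {set T}}) : {set {set T}} :=
  A :|: [set e in ES S | r <= #|[set f in A | nbr e f]|].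
Definition iterB S r A k := iter k (stepB S r) A.
Definition percB S r A := forall e, e \in ES S -> exists k, e \in iterB S r A k.

Lemma iterBS S r (A : {set {set T}}) k : iterB S r A k.+1 = stepB S r (iterB S r A k).
Proof. by []. Qed.

Lemma stepB_sub S r (A : {set {set T}}) : A \subset stepB S r A.
Proof. exact: subsetUl. Qed.

Lemma iterB_mono S r (A : {set {set T}}) k l : k <= l -> iterB S r A k \subset iterB S r A l.
Proof.
move=> kl; rewrite -(subnK kl); elim: (l - k) => [|d IH]; first by rewrite add0n.
rewrite addSn iterBS; exact: subset_trans IH (stepB_sub _ _ _).
Qed.

Lemma iterB_mem S r (A : {set {set T}}) k l e : k <= l -> e \in iterB S r A k -> e \in iterB S r A l.
Proof. by move=> kl; apply/subsetP/iterB_mono. Qed.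

Lemma iterB0 S r (A : {set {set T}}) k e : e \in A -> e \in iterB S r A k.
Proof. by apply: (@iterB_mem _ _ _ 0). Qed.

Lemma iterB_sub S r (A : {set {set T}}) k : A \subset ES S -> iterB S r A k \subset ES S.
Proof.
move=> AS; elim: k => [|k IH] //=.
apply/subsetP => e; rewrite inE => /orP[/(subsetP IH)//|]; by rewrite inE => /andP[].
Qed.

Lemma ES_mono (S S' : {set T}) : S \subset S' -> ES S \subset ES S'.
Proof.
move=> H; apply/subsetP => e; rewrite !inE => /andP[eS ->]; by rewrite (subset_trans eS H).
Qed.

Lemma two_set (g : {set T}) p z : #|g| = 2 -> p \in g -> z \in g -> p != z -> g = [set p; z].
Proof.
move=> cg pg zg pz; apply/eqP; rewrite eq_sym eqEcard cards2 pz cg andbT.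
by apply/subsetP => u; rewrite !inE => /orP[]/eqP->.
Qed.

Lemma card_setU_le (A B : {set {set T}}) : #|A :|: B| <= #|A| + #|B|.
Proof. rewrite cardsU; lia. Qed.

Lemma card_setU_disj (A B : {set {set T}}) :
  (forall f, f \in A -> f \notin B) -> #|A :|: B| = #|A| + #|B|.
Proof.
move=> H; rewrite cardsU.
suff -> : A :&: B = set0 by rewrite cards0 subn0.
apply/setP => f; rewrite !inE; apply/negP => /andP[/H/negP]; done.
Qed.

Lemma set2_eq_in (x y z : T) : z \in [set x; y] = (z == x) || (z == y).
Proof. by rewrite !inE. Qed.

End Frame.

Definition gg r := (r + 2) ^ 2 %/ 8.
Definition ff r k := if (r.+1 %/ 2).+2 <= k then gg r else 'C(k, 2).

Lemma bin2S k : 'C(k.+1, 2) = 'C(k, 2) + k.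
Proof. by rewrite binS bin1. Qed.

Lemma bin2_mul k : 'C(k, 2) * 2 = k * k.-1.
Proof. elim: k => [|k IH] //. rewrite bin2S mulnDl IH /=. case: k {IH} => [|k] //=; lia. Qed.

Lemma gg_small r : r < 4 -> gg r <= r.
Proof. by case: r => [|[|[|[|r]]]]. Qed.

Lemma gg_step r : 4 <= r -> gg r = r + gg (r - 4).
Proof.
move=> H; rewrite /gg.
have -> : (r + 2) ^ 2 = r * 8 + (r - 4 + 2) ^ 2.
  rewrite -(subnK H); set t := r - 4. rewrite addnK. rewrite !expnS expn0. nia.
by rewrite divnMDl.
Qed.

Lemma gg_le_bin r k : (r.+1 %/ 2).+2 <= k -> gg r <= 'C(k, 2).
Proof.
move=> H; rewrite /gg.
apply: (@leq_trans (('C(k,2) * 8) %/ 8)); last by rewrite mulnK.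
apply: leq_div2r.
apply: (@leq_trans ('C(k,2) * 2 * 4)); last lia.
rewrite bin2_mul. set M := r.+1 %/ 2 in H.
have rM : r <= 2 * M by rewrite /M; lia.
have : (r + 2) ^ 2 <= (2 * M + 2) ^ 2 by rewrite leq_exp2r //; lia.
move=> h; apply: (leq_trans h). rewrite !expnS expn0. case: k H => [|k] //= H. nia.
Qed.

Lemma ff_le_bin r k : ff r k <= 'C(k, 2).
Proof. rewrite /ff; case: ifP => // H; exact: gg_le_bin. Qed.

Lemma ff0 k : ff 0 k = 0.
Proof. rewrite /ff; case: ifP => //=; case: k => [|[|k]] //. Qed.

Lemma ff_step r k : 0 < r -> 2 <= k -> ff r k <= r + ff (r - 4) (k - 2).
Proof.
move=> r0 k2; rewrite /ff.
case: (ltnP r 4) => r4.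
- have -> : r - 4 = 0 by lia.
  case: ifP => H1.
    by apply: (@leq_trans r); [exact: gg_small | exact: leq_addr].
  move: H1; case: r r0 r4 => [|[|[|[|r]]]] //= _ _; case: k k2 => [|[|[|[|k]]]] //=.
- have e1 : ((r - 4).+1 %/ 2).+2 = (r.+1 %/ 2) by lia.
  rewrite e1; case: ifP => H1.
    have -> : (r.+1 %/ 2 <= k - 2) = true by lia.
    by rewrite gg_step.
  have -> : (r.+1 %/ 2 <= k - 2) = false by lia.
  rewrite -(subnK k2); set t := k - 2. rewrite addnK !addn2 !bin2S.
  have : t + t.+1 <= r by rewrite /t; lia.
  lia.
Qed.

Section Lower.
Variable T : finType.

Lemma card4 (a b c d : {set T}) :
  #|[set a] :|: [set b] :|: [set c] :|: [set d]| <= 4.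
Proof.
apply: leq_trans (card_setU_le _ _) _; rewrite cards1.
apply: leq_trans (leq_add (card_setU_le _ _) (leqnn 1)) _; rewrite cards1.
apply: leq_trans (leq_add (leq_add (card_setU_le _ _) (leqnn 1)) (leqnn 1)) _.
by rewrite !cards1.
Qed.

Lemma restrict4 (S : {set T}) r (A : {set {set T}}) (e : {set T}) :
  A \subset ES S -> e \in ES S -> forall k,
  iterB S r A k :&: ES (S :\: e) \subset iterB (S :\: e) (r - 4) (A :&: ES (S :\: e)) k.
Proof.
move=> AS eS; rewrite inE in eS; case/andP: eS => eS /cards2P [u [w [uw ->]]].
set S' := S :\: _.
elim => [|k IH] //.
rewrite !iterBS; set B := iterB S r A k; set B' := iterB S' _ _ k.
apply/subsetP => f; rewrite inE => /andP[]; rewrite inE => /orP[fB fS'|].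
  by rewrite inE (subsetP IH) // inE fB fS'.
rewrite inE => /andP[fS rf fS'].
rewrite inE; apply/orP; right; rewrite inE fS' /=.
move: (fS'); rewrite inE => /andP[fsub /cards2P [x [y [xy fxy]]]].
have BS : B \subset ES S by apply: iterB_sub.
set Q := [set [set x; u]] :|: [set [set x; w]] :|: [set [set y; u]] :|: [set [set y; w]].
have sub : [set g in B | nbr f g] \subset [set g in B' | nbr f g] :|: Q.
  apply/subsetP => g; rewrite inE => /andP[gB fg].
  case: (boolP (g \in ES S')) => gS'.
    rewrite inE; apply/orP; left; rewrite inE fg andbT; apply: (subsetP IH); by rewrite inE gB gS'.
  move: (subsetP BS g gB); rewrite inE => /andP[gS /eqP g2].
  have : ~~ (g \subset S') by move: gS'; rewrite inE g2 eqxx andbT.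
  case/subsetPn => z zg zS'.
  have zS : z \in S by apply: (subsetP gS).
  have ze : z \in [set u; w] by move: zS'; rewrite !inE zS andbT negbK.
  move: fg; rewrite /nbr => /andP[_ /set0Pn [p]]; rewrite inE => /andP[pf pg].
  have pS' : p \in S' by apply: (subsetP fsub).
  have pz : p != z by apply/eqP => pz; move: pS'; rewrite pz (negbTE zS').
  rewrite (two_set g2 pg zg pz).
  move: pf ze; rewrite fxy !inE => /orP[]/eqP -> /orP[]/eqP ->; rewrite !eqxx ?orbT //.
apply: (@leq_trans (#|[set g in B | nbr f g]| - 4)); first lia.
rewrite leq_subLR; apply: (leq_trans (subset_leq_card sub)).
by rewrite addnC; apply: leq_trans (card_setU_le _ _) _; rewrite leq_add2l card4.
Qed.

Lemma lower r : forall (S : {set T}) (A : {set {set T}}),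
  A \subset ES S -> percB S r A -> ff r #|S| <= #|A|.
Proof.
elim/ltn_ind: r => r IH S A AS perc.
case: (boolP (stepB S r A \subset A)) => Hfix.
  have iterA : forall k, iterB S r A k = A.
    by elim => //= k ->; apply/eqP; rewrite eqEsubset Hfix stepB_sub.
  have : ES S \subset A by apply/subsetP => e /perc [k]; rewrite iterA.
  move/subset_leq_card; rewrite /ES cards_draws => h.
  exact: leq_trans (ff_le_bin _ _) h.
case/subsetPn: Hfix => e; rewrite inE => /orP[->//|]; rewrite inE => /andP[eS re] _.
case: (posnP r) => [->|r0]; first by rewrite ff0.
set S' := S :\: e; set A' := A :&: ES S'.
have perc' : percB S' (r - 4) A'.
  move=> f fS'.
  have fS : f \in ES S by apply: (subsetP (ES_mono (subsetDl S e))).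
  case: (perc f fS) => k fk; exists k.
  by apply: (subsetP (restrict4 r AS eS k)); rewrite inE fk fS'.
have A'S' : A' \subset ES S' by apply: subsetIr.
have h : ff (r - 4) #|S'| <= #|A'| by apply: IH => //; lia.
move: (eS); rewrite inE => /andP[eSS /eqP e2].
have cS' : #|S'| = #|S| - 2 by rewrite /S' cardsD (setIidPr eSS) e2.
have k2 : 2 <= #|S| by rewrite -e2 subset_leq_card.
have disj : #|[set f in A | nbr e f] :|: A'| = #|[set f in A | nbr e f]| + #|A'|.
  apply: card_setU_disj => f; rewrite inE => /andP[_]; rewrite /nbr => /andP[_ /set0Pn [z]].
  rewrite inE => /andP[ze zf]; rewrite /A' !inE negb_and; apply/orP; right.
  apply/negP => /andP[fsub _]; move: (subsetP fsub z zf); by rewrite inE ze.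
have sub : [set f in A | nbr e f] :|: A' \subset A.
  by apply/subsetP => f; rewrite !inE => /orP[/andP[]|/andP[]].
apply: (@leq_trans (r + ff (r - 4) (#|S| - 2))); first exact: ff_step.
rewrite -cS'.
apply: (@leq_trans #|[set f in A | nbr e f] :|: A'|); last exact: subset_leq_card.
rewrite disj; exact: leq_add.
Qed.

End Lower.

Section Transfer.
Variable n : nat.
Notation LV := (@line_vertex 'I_n (@K_rel n)).
Notation LR := (@line_rel _ (@K_rel n)).

Definition Phi (X : {set LV}) : {set {set 'I_n}} := [set val v | v in X].

Lemma is_edge_ES (e : {set 'I_n}) : is_edge (@K_rel n) e = (e \in ES setT).
Proof.
rewrite inE subsetT /=; apply/existsP/cards2P.
  by case=> x /existsP [y /andP [xy /eqP ->]]; exists x, y.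
by case=> x [y [xy ->]]; exists x; apply/existsP; exists y; rewrite /K_rel xy eqxx.
Qed.

Lemma val_ES (v : LV) : val v \in ES setT.
Proof. by rewrite -is_edge_ES; apply: valP. Qed.

Lemma Phi_card X : #|Phi X| = #|X|.
Proof. by rewrite card_imset //; apply: val_inj. Qed.

Lemma Phi_sub X : Phi X \subset ES setT.
Proof. by apply/subsetP => e /imsetP [v _ ->]; apply: val_ES. Qed.

Lemma Phi_comp (P : pred LV) (Q : pred {set 'I_n}) :
  (forall v, P v = Q (val v)) -> Phi [set v | P v] = [set e in ES setT | Q e].
Proof.
move=> PQ; apply/setP => e; rewrite inE; apply/imsetP/andP.
  by case=> v; rewrite inE PQ => Pv ->; split => //; apply: val_ES.
case=> eS Qe; have ie : is_edge (@K_rel n) e by rewrite is_edge_ES.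
by exists (exist _ e ie); rewrite // inE PQ.
Qed.

Lemma nb_card (X : {set LV}) (v : LV) :
  #|[set u | LR v u & u \in X]| = #|[set f in Phi X | nbr (val v) f]|.
Proof.
rewrite -(card_imset _ val_inj); apply: eq_card => f; apply/imsetP/idP.
  by case=> u; rewrite !inE => /andP[vu uX] ->; rewrite imset_f.
rewrite inE => /andP[/imsetP [u uX ->] vu]; exists u => //; rewrite inE uX andbT; exact: vu.
Qed.

Lemma Phi_step r X : Phi (bp_step LR r X) = stepB setT r (Phi X).
Proof.
rewrite /bp_step /Phi imsetU; congr (_ :|: _).
apply: (Phi_comp (P := fun v => r <= #|[set u | LR v u & u \in X]|)
                  (Q := fun e => r <= #|[set f in Phi X | nbr e f]|)) => v.
by rewrite nb_card.
Qed.

Lemma Phi_iter r X k : Phi (bp_iter LR r X k) = iterB setT r (Phi X) k.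
Proof. elim: k => [|k IH] //=; by rewrite Phi_step IH. Qed.

Lemma perc_Phi r X : percolating LR r X <-> percB setT r (Phi X).
Proof.
split.
  move=> P e eS; have ie : is_edge (@K_rel n) e by rewrite is_edge_ES.
  case: (P (exist _ e ie)) => k vk; exists k.
  by rewrite -Phi_iter; apply/imsetP; exists (exist _ e ie).
move=> P v; case: (P (val v) (val_ES v)) => k; rewrite -Phi_iter => /imsetP [u uk /val_inj ->].
by exists k.
Qed.

Lemma Phi_onto (H : {set {set 'I_n}}) : H \subset ES setT -> Phi [set v | val v \in H] = H.
Proof.
move=> HS; rewrite (Phi_comp (Q := fun e => e \in H)) //.
by apply/setP => e; rewrite inE; apply/andP/idP => [[]|eH] //; rewrite (subsetP HS).
Qed.

End Transfer.

Lemma cardU_disj (U : finType) (A B : {set U}) :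
  (forall f, f \in A -> f \notin B) -> #|A :|: B| = #|A| + #|B|.
Proof.
move=> H; rewrite cardsU.
suff -> : A :&: B = set0 by rewrite cards0 subn0.
apply/setP => f; rewrite !inE; apply/negP => /andP[/H/negP]; done.
Qed.

Lemma cardU_le (U : finType) (A B : {set U}) : #|A :|: B| <= #|A| + #|B|.
Proof. rewrite cardsU; lia. Qed.

Lemma card_ordP n (P : pred nat) : #|[set z : 'I_n | P z]| = count P (iota 0 n).
Proof.
rewrite cardsE cardE /enum_mem size_filter -enumT -val_enum_ord count_map.
by apply: eq_count => z.
Qed.

Lemma count_int n a b : count (fun z => a <= z < b) (iota 0 n) = minn b n - a.
Proof.
elim: n => [|n IH]; first by rewrite /= minn0.
rewrite -addn1 iotaD count_cat IH /= add0n addn0.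
case: (leqP a n) => Ha; case: (ltnP n b) => Hb /=; lia.
Qed.

Lemma card_int n a b : #|[set z : 'I_n | a <= z < b]| = minn b n - a.
Proof. by rewrite (@card_ordP n (fun z => a <= z < b)) count_int. Qed.

Lemma count_odd n M : count (fun i => odd i && (i <= M)) (iota 0 n) = (minn n M.+1)./2.
Proof.
elim: n => [|n IH]; first by [].

rewrite -addn1 iotaD count_cat IH /= add0n addn0 -!divn2.
case: (leqP n M) => H.
  have -> : minn (n + 1) M.+1 = n.+1 by lia.
  have -> : minn n M.+1 = n by lia.
  rewrite andbT -modn2; lia.
have -> : minn (n + 1) M.+1 = M.+1 by lia.
have -> : minn n M.+1 = M.+1 by lia.
by rewrite andbF addn0.
Qed.

Lemma set2_mem_inj (U : finType) (a z1 z2 : U) :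
  z1 != a -> [set a; z1] = [set a; z2] -> z1 = z2.
Proof.
move=> za E; have : z1 \in [set a; z2] by rewrite -E !inE eqxx orbT.
by rewrite !inE (negbTE za) => /eqP.
Qed.

Lemma card_star (U : finType) (a : U) (Z : {set U}) :
  a \notin Z -> #|[set [set a; z] | z in Z]| = #|Z|.
Proof.
move=> aZ; apply: card_in_imset => z1 z2 z1Z _; apply: set2_mem_inj.
by apply/eqP => e; move: aZ; rewrite -e z1Z.
Qed.

Lemma univ_red (T : finType) (S : {set T}) (x : T) rho (A : {set {set T}}) K :
  x \in S -> A \subset ES S ->
  (forall y, y \in S -> y != x -> [set x; y] \in iterB S rho A K) ->
  percB (S :\ x) (rho - 2) (A :&: ES (S :\ x)) -> percB S rho A.
Proof.
move=> xS AS Hx P' e eS.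
move: (eS); rewrite inE => /andP[eSS /cards2P [a [b [ab ee]]]].
have aS : a \in S by apply: (subsetP eSS); rewrite ee !inE eqxx.
have bS : b \in S by apply: (subsetP eSS); rewrite ee !inE eqxx orbT.
case: (boolP (x \in e)) => xe.
  exists K; move: xe; rewrite ee !inE => /orP[]/eqP xa.
    by rewrite -xa; apply: Hx => //; rewrite xa eq_sym.
  by rewrite -xa setUC; apply: Hx => //; rewrite xa.
set S' := S :\ x; set A' := A :&: ES S'.
have eS' : e \in ES S'.
  rewrite inE ee cards2 ab andbT; apply/subsetP => z; rewrite !inE => /orP[]/eqP ->.
    by rewrite aS andbT; apply/eqP => ax; move: xe; rewrite ee ax !inE eqxx.
  by rewrite bS andbT; apply/eqP => bx; move: xe; rewrite ee bx !inE eqxx orbT.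
have A'S' : A' \subset ES S' by apply: subsetIr.
have claim : forall i, iterB S' (rho - 2) A' i \subset iterB S rho A (K + i).
  elim => [|i IH].
    by apply/subsetP => f; rewrite addn0 inE => /andP[fA _]; apply: iterB0.
  rewrite addnS !iterBS; set B := iterB S rho A (K + i); set B' := iterB S' _ _ i.
  apply/subsetP => f; rewrite inE => /orP[fB'|].
    by apply: (subsetP (stepB_sub _ _ _)); apply: (subsetP IH).
  rewrite inE => /andP[fS' rf].
  have fS : f \in ES S by apply: (subsetP (ES_mono (subD1set S x))).
  rewrite inE; apply/orP; right; rewrite inE fS /=.
  move: (fS'); rewrite inE => /andP[fsub /cards2P [c [d [cd fcd]]]].
  have cS' : c \in S' by apply: (subsetP fsub); rewrite fcd !inE eqxx.
  have dS' : d \in S' by apply: (subsetP fsub); rewrite fcd !inE eqxx orbT.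
  move: (cS') (dS'); rewrite !inE => /andP[cx cS] /andP[dx dS].
  have B'S' : B' \subset ES S' by apply: iterB_sub.
  have xnB' : forall g, g \in B' -> x \notin g.
    move=> g /(subsetP B'S'); rewrite inE => /andP[gs _]; apply/negP => /(subsetP gs).
    by rewrite !inE eqxx.
  have xnf : x \notin f by apply/negP => /(subsetP fsub); rewrite !inE eqxx.
  set Q := [set [set x; c]] :|: [set [set x; d]].
  have cQ : #|Q| = 2.
    rewrite cardU_disj ?cards1 // => g; rewrite !inE => /eqP -> ; apply/eqP => E.
    by move: cd; rewrite (set2_mem_inj _ E) ?eqxx // eq_sym.
  have nbrx : forall z, z \in f -> nbr f [set x; z].
    move=> z zf; rewrite /nbr; apply/andP; split.
      by apply/eqP => E; move: xnf; rewrite E !inE eqxx.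
    by apply/set0Pn; exists z; rewrite !inE zf eqxx orbT.
  have sub : [set g in B' | nbr f g] :|: Q \subset [set g in B | nbr f g].
    apply/subsetP => g; rewrite !inE => /orP[/andP[gB' fg]|/orP[]/eqP ->].
    - by rewrite (subsetP IH) ?fg.
    - rewrite nbrx ?fcd ?inE ?eqxx // andbT.
      by apply: (iterB_mem (leq_addr i K)); apply: Hx.
    - rewrite nbrx ?fcd ?inE ?eqxx ?orbT // andbT.
      by apply: (iterB_mem (leq_addr i K)); apply: Hx.
  have disj : #|[set g in B' | nbr f g] :|: Q| = #|[set g in B' | nbr f g]| + 2.
    rewrite -cQ; apply: cardU_disj => g; rewrite inE => /andP[gB' _].
    rewrite !inE; apply/negP => /orP[]/eqP E; move: (xnB' g gB'); by rewrite E !inE eqxx.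
  apply: (@leq_trans (#|[set g in B' | nbr f g]| + 2)); first by move: rf; clear; lia.
  by rewrite -disj; apply: subset_leq_card.
have [i ei] := P' e eS'.
by exists (K + i); apply: (subsetP (claim i)).
Qed.

Lemma nbr_l (U : finType) (x y z : U) : y != x -> y != z -> nbr [set x; y] [set x; z].
Proof.
move=> yx yz; rewrite /nbr; apply/andP; split.
  apply/eqP => E; have : y \in [set x; z] by rewrite -E !inE eqxx orbT.
  by rewrite !inE (negbTE yx) (negbTE yz).
by apply/set0Pn; exists x; rewrite !inE eqxx.
Qed.

Lemma nbr_r (U : finType) (x y z : U) : x != y -> x != z -> nbr [set x; y] [set y; z].
Proof. by move=> xy xz; rewrite [[set x; y]]setUC; apply: nbr_l. Qed.

Ltac olia := repeat match goal with |- context [nat_of_ord ?x] => let k := fresh "k" in move: (nat_of_ord x) => k end; lia.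

Section Family.
Variables n r : nat.
Definition MM := r.+1 %/ 2.
Definition DD := n - MM.
Definition P1 := [set p : 'I_n * 'I_n | p.1 + DD <= p.2].
Definition P2 := [set p : 'I_n * 'I_n |
  [&& ~~ odd r, p.2 == p.1.+1 :> nat, odd p.1 & p.1 <= MM]].
Definition Hf := [set [set p.1; p.2] | p in P1 :|: P2].
Definition Sset s := [set z : 'I_n | s <= z].
Definition Hs s := Hf :&: ES (Sset s).

Hypothesis hn : MM.+2 <= n.

Lemma D2 : 2 <= DD.
Proof. move: hn; rewrite /DD; lia. Qed.

Lemma mem_Hf1 (a b : 'I_n) : a + DD <= b -> [set a; b] \in Hf.
Proof. by move=> h; apply/imsetP; exists (a, b) => //; rewrite !inE /= h. Qed.

Lemma mem_Hf2 (a b : 'I_n) : ~~ odd r -> b = a.+1 :> nat -> odd a -> a <= MM -> [set a; b] \in Hf.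
Proof.
move=> h1 h2 h3 h4; apply/imsetP; exists (a, b) => //.
by rewrite inE; apply/orP; right; rewrite inE /= h1 h2 eqxx h3 h4.
Qed.

Lemma ES_Sset2 s (a b : 'I_n) : s <= a -> s <= b -> a != b -> [set a; b] \in ES (Sset s).
Proof.
move=> sa sb ab; rewrite inE cards2 ab andbT.
by apply/subsetP => z; rewrite !inE => /orP[]/eqP ->.
Qed.

Lemma Hf_ES : Hf \subset ES setT.
Proof.
apply/subsetP => e /imsetP [p]; rewrite !inE => pP ->.
suff h : p.1 != p.2 by rewrite subsetT cards2 h.
apply/eqP => E; have := D2; move: pP; rewrite E; clear E => /orP[|/and4P[_ /eqP]]; olia.
Qed.

Lemma stair s (x : 'I_n) : x = s :> nat -> forall j (y : 'I_n), y = j :> nat -> s < j ->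
  [set x; y] \in iterB (Sset s) (r - 2 * s) (Hs s) (j - s).
Proof.
move=> xs; elim/ltn_ind => j IHj y yj sj.
have D2' := D2.
have xy : x != y by apply/eqP => E; move: sj; rewrite -yj -E xs ltnn.
have eS : [set x; y] \in ES (Sset s) by apply: ES_Sset2 => //; rewrite ?xs ?yj //; lia.
have -> : j - s = (j - s - 1).+1 by lia.
rewrite iterBS; set B := iterB _ _ _ (j - s - 1).
case: (boolP ([set x; y] \in Hs s)) => eA.
  by apply: (subsetP (stepB_sub _ _ _)); apply: iterB0.
rewrite inE; apply/orP; right; rewrite inE eS /=.
have jD : j < s + DD.
  rewrite ltnNge; apply/negP => h; move: eA; rewrite inE eS andbT mem_Hf1 //; lia.
set Za := [set z : 'I_n | s < z < j].
set Zb := [set z : 'I_n | s + DD <= z < n].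
set Z3 := [set z : 'I_n | j + DD <= z < n].
set cond := ~~ odd r && (j <= MM).
set kk := if odd j then j.+1 else j.-1.
set Z4 := [set z : 'I_n | cond && (z == kk :> nat)].
set X12 := [set [set x; z] | z in Za :|: Zb].
set X34 := [set [set y; z] | z in Z3 :|: Z4].
have jn : j < n by rewrite -yj ltn_ord.
have cZa : #|Za| = j - s.+1 by rewrite card_int; lia.
have cZb : #|Zb| = n - (s + DD) by rewrite card_int; lia.
have cZ3 : #|Z3| = n - (j + DD) by rewrite card_int; lia.
have cZ4 : cond <= #|Z4|.
  case cnd : cond => //.
  have kn : kk < n by move: cnd; rewrite /cond /kk /MM; case: (odd j); move: hn; rewrite /MM; lia.
  have : [set Ordinal kn] \subset Z4 by apply/subsetP => z; rewrite !inE => /eqP ->; rewrite /= cnd eqxx.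
  by move/subset_leq_card; rewrite cards1.
have Z4v : forall z : 'I_n, z \in Z4 -> [/\ cond, (z : nat) = kk & z != x].
  move=> z; rewrite inE => /andP[cnd /eqP zk]; split => //.
  apply/eqP => zx; move: cnd zk; rewrite /cond /kk; case/andP => er jM.
  case oj : (odd j) => zk; first by move: zk; rewrite zx xs; lia.
  have sj1 : j = s.+1 by move: zk sj; rewrite zx xs; lia.
  have : [set x; y] \in Hf.
    apply: mem_Hf2 => //; rewrite ?xs ?yj //; last lia.
    by move: oj; rewrite sj1 /= => /negbFE.
  by move: eA; rewrite inE eS andbT => /negP.
have Z4s : forall z : 'I_n, z \in Z4 -> s <= z.
  by move=> z /Z4v [_ -> _]; rewrite /kk; case: (odd j); lia.
have Z4k : forall z : 'I_n, z \in Z4 -> z <= j.+1.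
  by move=> z /Z4v [_ -> _]; rewrite /kk; case: (odd j); lia.
have dab : #|Za :|: Zb| = #|Za| + #|Zb|.
  by apply: cardU_disj => z; rewrite !inE => /andP[_ h]; lia.
have d34 : #|Z3 :|: Z4| = #|Z3| + #|Z4|.
  apply: cardU_disj => z; rewrite inE => /andP[h _]; apply/negP => /Z4k; lia.
have cX12 : #|X12| = #|Za :|: Zb|.
  by apply: card_star; rewrite !inE xs; lia.
have cX34 : #|X34| = #|Z3 :|: Z4|.
  apply: card_star; rewrite inE negb_or; apply/andP; split; first by rewrite inE yj; lia.
  by apply/negP => /Z4v [_]; rewrite yj /kk; case: (odd j); lia.
have xX34 : forall f, f \in X34 -> x \notin f.
  move=> f /imsetP [z]; rewrite inE => /orP[zZ|/Z4v [_ _ zx]] ->; rewrite !inE negb_or.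
    apply/andP; split; first by apply/eqP => E; move: sj; rewrite -yj -E xs ltnn.
    by apply/eqP => E; move: zZ; rewrite inE -E xs; lia.
  by rewrite [x == z]eq_sym (negbTE zx) andbT; apply/eqP => E; move: sj; rewrite -yj -E xs ltnn.
have dX : #|X12 :|: X34| = #|X12| + #|X34|.
  apply: cardU_disj => f /imsetP [z _ ->]; apply/negP => /xX34; by rewrite !inE eqxx.
have sub : X12 :|: X34 \subset [set f in B | nbr [set x; y] f].
  apply/subsetP => f; rewrite inE => /orP[] /imsetP [z]; rewrite inE => /orP[] zZ ->;
    rewrite inE.
  - move: zZ; rewrite inE => /andP[sz zj].
    have zx : z != x by apply/eqP => E; move: sz; rewrite E xs ltnn.
    rewrite nbr_l ?andbT; first last.
      by apply/eqP => E; move: zj; rewrite -E yj ltnn.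
      by rewrite eq_sym.
    apply: (@iterB_mem _ _ _ _ (z - s)); first lia.
    by apply: IHj => //; rewrite -yj.
  - move: zZ; rewrite inE => /andP[sz _].
    have zx : z != x by apply/eqP => E; move: sz; rewrite E xs; lia.
    rewrite nbr_l ?andbT; first last.
      by apply/eqP => E; move: sz; rewrite -E yj; lia.
      by rewrite eq_sym.
    apply: iterB0; rewrite inE mem_Hf1 ?xs //=; apply: ES_Sset2; [by rewrite xs | lia | by rewrite eq_sym].
  - move: zZ; rewrite inE => /andP[jz _].
    have zy : z != y by apply/eqP => E; move: jz; rewrite E yj; lia.
    rewrite nbr_r ?andbT //; first last.
      by apply/eqP => E; move: jz; rewrite -E xs; lia.
    apply: iterB0; rewrite inE mem_Hf1 ?yj //=; apply: ES_Sset2; [by rewrite yj; lia | lia | by rewrite eq_sym].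
  - move: (Z4s z zZ) (Z4k z zZ); case/Z4v: zZ => cnd zk zx sz zj.
    have zy : z != y by apply/eqP => E; move: zk; rewrite /kk E yj; case: (odd j); lia.
    rewrite nbr_r ?andbT //; last by rewrite eq_sym.
    apply: iterB0; rewrite inE; apply/andP; split; last first.
      by apply: ES_Sset2; [rewrite yj; lia | exact: sz | rewrite eq_sym].
    move: cnd zk; rewrite /cond /kk; case/andP => er jM.
    case: (boolP (odd j)) => oj zk.
      by apply: mem_Hf2; rewrite ?yj.
    have j1 : j = (j.-1).+1 by lia.
    rewrite setUC; apply: mem_Hf2 => //; rewrite ?yj ?zk; try lia.
apply: (@leq_trans #|X12 :|: X34|); last exact: subset_leq_card.
rewrite dX cX12 cX34 dab d34 cZa cZb cZ3.
have m2 := modn2 r.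
move: cZ4; rewrite /cond; case: (boolP (odd r)) => or; rewrite ?or /= in m2 *;
case: (leqP j MM) => jM /=; move: hn jD sj jn m2 jM; rewrite /DD /MM; lia.
Qed.


Lemma Sset0 : Sset 0 = setT.
Proof. by apply/setP => z; rewrite !inE. Qed.

Lemma Hs0 : Hs 0 = Hf.
Proof. by rewrite /Hs Sset0; apply/setIidPl; exact: Hf_ES. Qed.

Lemma cascade : forall t s, s + t = n -> percB (Sset s) (r - 2 * s) (Hs s).
Proof.
elim => [|t IH] s st.
  rewrite addn0 in st; move=> e; rewrite inE => /andP[esub /cards2P [a [b [_ ee]]]].
  have : a \in Sset s by apply: (subsetP esub); rewrite ee !inE eqxx.
  by rewrite inE => h; move: (ltn_ord a); lia.
have sn : s < n by lia.
pose x := Ordinal sn.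
apply: (@univ_red _ _ x _ _ n).
- by rewrite inE.
- exact: subsetIr.
- move=> y; rewrite inE => sy yx.
  have sy' : s < y.
    rewrite ltn_neqAle sy andbT; apply/eqP => E; move: yx; suff -> : y = x by rewrite eqxx.
    by apply: val_inj; rewrite /= -E.
  apply: (@iterB_mem _ _ _ _ (y - s)); first by move: (ltn_ord y); lia.
  by apply: stair.
have e1 : Sset s :\ x = Sset s.+1.
  apply/setP => z; rewrite !inE; apply/andP/idP => [[zx sz]|sz]; last first.
    split=> //; last lia; apply/eqP => E; move: sz; by rewrite E /= ltnn.
  rewrite ltn_neqAle sz andbT; apply/eqP => E; move: zx; suff -> : z = x by rewrite eqxx.
  by apply: val_inj; rewrite /= -E.
have e2 : Hs s :&: ES (Sset s.+1) = Hs s.+1.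
  rewrite /Hs -setIA; congr (_ :&: _); apply/setIidPr; apply: ES_mono.
  by apply/subsetP => z; rewrite !inE; lia.
rewrite e1 e2 (_ : r - 2 * s - 2 = r - 2 * s.+1); last lia.
by apply: IH; lia.
Qed.

Lemma Hf_perc : percB setT r Hf.
Proof. by rewrite -Sset0 -Hs0 -[r](subn0) -(muln0 2); apply: (@cascade n); rewrite add0n. Qed.

Lemma set2_ord m (a b c d : 'I_m) : a < b -> c < d -> [set a; b] = [set c; d] -> a = c /\ b = d.
Proof.
move=> ab cd E.
have aE : a \in [set c; d] by rewrite -E !inE eqxx.
have bE : b \in [set c; d] by rewrite -E !inE eqxx orbT.
have cE : c \in [set a; b] by rewrite E !inE eqxx.
have dE : d \in [set a; b] by rewrite E !inE eqxx orbT.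
suff [h1 h2] : (a : nat) = c /\ (b : nat) = d by split; apply: val_inj.
pose V := @nat_of_ord m.
move: aE bE cE dE ab cd; rewrite !inE
  => /orP[]/eqP/(congr1 V) h1 /orP[]/eqP/(congr1 V) h2 /orP[]/eqP/(congr1 V) h3 /orP[]/eqP/(congr1 V) h4;
  move: h1 h2 h3 h4; rewrite /V; clear V E; lia.
Qed.

Lemma P1_card : #|P1| <= 'C(MM.+1, 2).
Proof.
pose f := fun p : 'I_n * 'I_n => [set (inord p.1 : 'I_MM.+1); inord (p.2 - DD + 1)].
have DDn : DD <= n by rewrite /DD leq_subr.
have Mv : MM = n - DD by move: hn; rewrite /DD; lia.
have key : forall p, p \in P1 -> [/\ p.1 < p.2 - DD + 1, p.2 - DD + 1 <= MM & DD <= p.2].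
  move=> p; rewrite inE => h; move: h (ltn_ord p.2) (D2); rewrite Mv.
  move: (nat_of_ord p.1) (nat_of_ord p.2) => a b h1 h2 h3; split; lia.
have inj : {in P1 &, injective f}.
  move=> [p1 p2] [q1 q2] /key [h1 h2 h3] /key [k1 k2 k3]; rewrite /f /= => E.
  move: h1 h2 h3 k1 k2 k3 E; rewrite /=.
  move: p1 p2 q1 q2 => p1 p2 q1 q2 h1 h2 h3 k1 k2 k3 E.
  have v1 : (inord p1 : 'I_MM.+1) = p1 :> nat by apply: inordK; move: h1 h2; olia.
  have v2 : (inord (p2 - DD + 1) : 'I_MM.+1) = p2 - DD + 1 :> nat by apply: inordK; move: h2; olia.
  have w1 : (inord q1 : 'I_MM.+1) = q1 :> nat by apply: inordK; move: k1 k2; olia.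
  have w2 : (inord (q2 - DD + 1) : 'I_MM.+1) = q2 - DD + 1 :> nat by apply: inordK; move: k2; olia.
  have hp : (inord p1 : 'I_MM.+1) < (inord (p2 - DD + 1) : 'I_MM.+1) by rewrite v1 v2.
  have hq : (inord q1 : 'I_MM.+1) < (inord (q2 - DD + 1) : 'I_MM.+1) by rewrite w1 w2.
  have [/(congr1 val) e1 /(congr1 val) e2] := set2_ord hp hq E.
  have e4 : (p1 : nat) = q1 by move: e1 v1 w1 => /=; olia.
  have e3 : (p2 : nat) = q2 by move: e2 v2 w2 h3 k3 => /=; olia.
  by congr (_, _); apply: val_inj.
rewrite -(card_in_imset inj).
apply: (@leq_trans #|[set A : {set 'I_MM.+1} | #|A| == 2]|); last by rewrite card_draws card_ord.
apply: subset_leq_card; apply/subsetP => A /imsetP [[a b] /key [h1 h2 h3] ->].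
move: h1 h2 h3; rewrite /= => h1 h2 h3.
have v1 : (inord a : 'I_MM.+1) = a :> nat by apply: inordK; move: h1 h2; olia.
have v2 : (inord (b - DD + 1) : 'I_MM.+1) = b - DD + 1 :> nat by apply: inordK; move: h2; olia.
suff h : (inord a : 'I_MM.+1) != (inord (b - DD + 1) : 'I_MM.+1) by rewrite inE cards2 h.
apply/eqP => /(congr1 val) /=; rewrite v1 v2; move: h1; olia.
Qed.


Lemma P2_card : #|P2| <= ~~ odd r * (MM.+1)./2.
Proof.
case: (boolP (odd r)) => or /=.
  have -> : P2 = set0 by apply/setP => p; rewrite !inE or.
  by rewrite cards0.
rewrite mul1n.
have inj : {in P2 &, injective (fun p : 'I_n * 'I_n => p.1)}.
  move=> [a1 a2] [b1 b2]; rewrite !inE /= => /and4P[_ /eqP ha _ _] /and4P[_ /eqP hb _ _] e.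
  have e' := congr1 (@nat_of_ord n) e.
  have a2b2 : a2 = b2 by apply: ord_inj; move: ha hb e'; olia.
  by rewrite e a2b2.
rewrite -(card_in_imset inj).
apply: (@leq_trans #|[set i : 'I_n | odd i && (i <= MM)]|).
  apply: subset_leq_card; apply/subsetP => i /imsetP [[a b] + ->]; rewrite !inE /=.
  by case/and4P => _ _ -> ->.
rewrite (@card_ordP n (fun i => odd i && (i <= MM))) count_odd.
exact: (half_leq (geq_minr n MM.+1)).
Qed.

Lemma gg_count : 'C(MM.+1, 2) + ~~ odd r * (MM.+1)./2 <= gg r.
Proof.
rewrite /gg; set L := _ + _.
apply: (@leq_trans ((L * 8) %/ 8)); first by rewrite mulnK.
apply: leq_div2r; rewrite /L.
have b := bin2_mul (MM.+1).
have m2 := modn2 r.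
have hM : MM = r.+1 %/ 2 by [].
move: b; rewrite -divn2 /=.
move: ('C(MM.+1, 2)) => C b.
have h2 : (MM.+1 %/ 2) * 2 <= MM.+1 by rewrite leq_divM.
move: (MM.+1 %/ 2) h2 => h h2.
case: (boolP (odd r)) => or /= in m2 *.
  have rE : r + 2 = 2 * MM + 1 by lia.
  rewrite mul0n addn0 rE.
  have : C * 8 = 4 * (MM.+1 * MM) by rewrite -b; lia.
  move=> ->; move: (MM) => m; nia.
have rE : r + 2 = 2 * MM + 2 by lia.
rewrite mul1n rE.
have : C * 8 = 4 * (MM.+1 * MM) by rewrite -b; lia.
move: (MM) b h2 => m b h2.
nia.
Qed.

Lemma Hf_card : #|Hf| <= gg r.
Proof.
apply: (leq_trans (leq_imset_card _ _)).
apply: (leq_trans (cardU_le _ _)).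
apply: leq_trans gg_count; exact: leq_add P1_card P2_card.
Qed.

End Family.


Theorem theorem5p4 (n r : nat) (hn : 0 < n) (hr : 0 < r) :
  min_percolating_size (@line_rel _ (@K_rel n)) r
    (if (r.+1 %/ 2).+2 <= n then (r + 2) ^ 2 %/ 8 else 'C(n, 2)).
Proof.
have cT : #|[set: 'I_n]| = n by rewrite cardsT card_ord.
change (min_percolating_size (@line_rel _ (@K_rel n)) r (ff r n)).
split.
  case: (boolP ((r.+1 %/ 2).+2 <= n)) => h.
    have HS : Hf n r \subset ES setT by apply: Hf_ES.
    have HP : percB setT r (Hf n r) by apply: Hf_perc.
    exists [set v | val v \in Hf n r]; split.
      by apply/perc_Phi; rewrite Phi_onto.
    rewrite -Phi_card Phi_onto //; apply/eqP; rewrite eqn_leq.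
    have hl := lower HS HP; rewrite cT in hl; rewrite hl andbT.
    by rewrite /ff h; apply: Hf_card.
  exists setT; split.
    by move=> v; exists 0; rewrite /bp_iter /= inE.
  have -> : [set: line_vertex (@K_rel n)] = [set v | val v \in ES setT].
    by apply/setP => v; rewrite in_setT; symmetry; rewrite in_set; exact: val_ES.
  by rewrite -Phi_card Phi_onto // /ES cards_draws cT /ff (negbTE h).
move=> X PX; rewrite -Phi_card.
have := lower (Phi_sub X) (proj1 (perc_Phi r X) PX).
by rewrite cT.
Qed.
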